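(* Let $0<\epsilon<0.5$ and let $n,s,s_0\in\mathbb{N}$ with $s_0\mid n$ and $n\ge s>2s_0$. If $\boldsymbol{c}\in\Sigma_{\rm DNA}^n$ is GC-$(s_0,\epsilon)$-partition balanced, then $\boldsymbol{c}$ is GC-$(s,\delta)$-locally balanced with $$\delta=\frac{(s_0-1)(1-2\epsilon)}{s}+\epsilon.$$ Consequently every GC-$(s_0,\epsilon)$-partition balanced code of length $n$ is GC-$(s,\delta)$-locally balanced.
   Context: For $\boldsymbol{x}\in\Sigma_{\rm DNA}^n$ ($\Sigma_{\rm DNA}=\{\mathrm A,\mathrm T,\mathrm C,\mathrm G\}$), $\mathrm{wt}_{\rm GC}(\boldsymbol{x})$ is the number of positions equal to G or C. If $s_0\mid n$ and $\boldsymbol{x}=(\boldsymbol{x}^{(1)},\dots,\boldsymbol{x}^{(n/s_0)})$ with $\boldsymbol{x}^{(i)}=(x_{(i-1)s_0+1},\dots,x_{is_0})$, then $\boldsymbol{x}$ is GC-$(s_0,\epsilon)$-partition balanced if $|\mathrm{wt}_{\rm GC}(\boldsymbol{x}^{(i)})/s_0-0.5|\le\epsilon$ for all $i\in[n/s_0]$. For $s<n$ (or $s\le n$), $\boldsymbol{x}$ is GC-$(s,\delta)$-locally balanced if for every $i\in[n-s+1]$ the window $\boldsymbol{x}_i=(x_i,\dots,x_{i+s-1})$ satisfies $|\mathrm{wt}_{\rm GC}(\boldsymbol{x}_i)/s-0.5|\le\delta$. *)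

(* Defs.v *)
From mathcomp Require Import all_boot all_order all_algebra.
Set Implicit Arguments. Unset Strict Implicit. Unset Printing Implicit Defensive.
Import Order.TTheory GRing.Theory Num.Theory.

Inductive DNA := A | T | C | G.

Definition isGC (b : DNA) : bool :=
  match b with C | G => true | _ => false end.

(* A word of length n over DNA is an n.-tuple; positions are 0-indexed here. *)
Definition wt_GC_window (n : nat) (x : n.-tuple DNA) (i len : nat) : nat :=
  \sum_(i <= j < i + len) isGC (nth A x j).

Local Open Scope ring_scope.

(* GC-(s0,eps)-partition balanced: s0 | n and every block
   x^(k) = (x_{k s0 + 1}, ..., x_{(k+1) s0}) (1-indexed), k < n/s0,
   satisfies |wt/s0 - 1/2| <= eps. *)
Definition partition_balanced (R : realFieldType) (n : nat) (s0 : nat) (eps : R)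
    (x : n.-tuple DNA) : Prop :=
  (s0 %| n)%N /\
  forall k : nat, (k < n %/ s0)%N ->
    `| (wt_GC_window x (k * s0) s0)%:R / s0%:R - 1 / 2 | <= eps.

Definition locally_balanced (R : realFieldType) (n : nat) (s : nat) (delta : R)
    (x : n.-tuple DNA) : Prop :=
  forall i : nat, (i + s <= n)%N ->
    `| (wt_GC_window x i s)%:R / s%:R - 1 / 2 | <= delta.

(* Main.v *)
Require Import Defs.
From mathcomp Require Import all_boot all_order all_algebra.
From mathcomp Require Import zify ring lra.
Import Order.TTheory GRing.Theory Num.Theory.
Local Open Scope ring_scope.

Section Aux.
Variable (n : nat) (c : n.-tuple DNA).
Local Notation wt := (wt_GC_window c).

Lemma wt_split j l1 l2 : wt j (l1 + l2) = (wt j l1 + wt (j + l1) l2)%N.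
Proof.
rewrite /wt_GC_window addnA (@big_cat_nat _ _ _ (j + l1) j (j + l1 + l2)) //;
  exact: leq_addr.
Qed.

Lemma wt_le j l : (wt j l <= l)%N.
Proof.
rewrite /wt_GC_window.
apply: leq_trans (_ : (\sum_(j <= k < j + l) 1 <= l)%N).
  by apply: leq_sum => k _; case: isGC.
by rewrite sum_nat_const_nat muln1 addKn.
Qed.

Lemma wt_blocks s0 k0 m :
  wt (k0 * s0) (m * s0) = (\sum_(k < m) wt ((k0 + k) * s0) s0)%N.
Proof.
elim: m => [|m IH]; first by rewrite big_ord0 mul0n /wt_GC_window addn0 big_geq.
by rewrite big_ord_recr /= mulSnr wt_split IH mulnDl.
Qed.
End Aux.

Lemma real_bound (R : realFieldType) (eps s s0 p P F : R) :
  0 < eps -> eps < 1/2 -> 0 < s -> 0 <= P -> P <= p -> p <= 2 * (s0 - 1) ->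
  (s - p) * (1/2 - eps) <= F -> F <= (s - p) * (1/2 + eps) ->
  `|(P + F) / s - 1/2| <= (s0 - 1) * (1 - 2 * eps) / s + eps.
Proof.
move=> e0 e1 s0p P0 Pp pb Fl Fu.
have sne : s != 0 by rewrite gt_eqF.
have -> : (P + F) / s - 1/2 = (P + F - s/2) / s by field.
have -> : (s0 - 1) * (1 - 2 * eps) / s + eps = ((s0 - 1) * (1 - 2 * eps) + eps * s) / s by field.
rewrite normrM (gtr0_norm (_ : 0 < s^-1)) ?invr_gt0 // ler_pM2r ?invr_gt0 //.
rewrite ler_norml; apply/andP; split; nra.
Qed.

Theorem lemma7 (R : realFieldType) (eps : R) (n s s0 : nat) :
  0 < eps -> eps < 1 / 2 ->
  (s0 %| n)%N -> (s <= n)%N -> (2 * s0 < s)%N ->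
  forall c : n.-tuple DNA,
    partition_balanced s0 eps c ->
    locally_balanced s
      ((s0 - 1)%:R * (1 - 2 * eps) / s%:R + eps) c.
Proof.
move=> e0 e1 dvd sn ss0 c [_ Hpb] i Hi.
have s0pos : (0 < s0)%N.
  move: dvd; rewrite lt0n; apply: contraL => /eqP s00.
  rewrite s00 dvd0n; apply/negP => /eqP n0; lia.
set k0 := ((i + s0.-1) %/ s0)%N.
set k1 := ((i + s) %/ s0)%N.
have E0 := divn_eq (i + s0.-1) s0.
have M0 := ltn_pmod (i + s0.-1) s0pos.
have E1 := divn_eq (i + s) s0.
have M1 := ltn_pmod (i + s) s0pos.
rewrite -/k0 in E0; rewrite -/k1 in E1.
have lt01 : (k0 * s0 < k1 * s0)%N by lia.
have lek : (k0 <= k1)%N by rewrite ltn_pmul2r // in lt01; exact: ltnW.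
set a := (k0 * s0 - i)%N.
set b := (i + s - k1 * s0)%N.
set m := (k1 - k0)%N.
have mdef : m = (k1 - k0)%N by [].
have ms : (m * s0 = k1 * s0 - k0 * s0)%N by rewrite /m mulnBl.
have sdec : s = (a + (m * s0 + b))%N by rewrite ms /a /b; lia.
have ia : (i + a = k0 * s0)%N by rewrite /a; lia.
have wdec : wt_GC_window c i s =
   (wt_GC_window c i a + (\sum_(k < m) wt_GC_window c ((k0 + k) * s0) s0)
    + wt_GC_window c (k0 * s0 + m * s0) b)%N.
  by rewrite {1}sdec wt_split wt_split ia wt_blocks addnA.
clearbody m k0 k1.
have nd : n = (n %/ s0 * s0)%N by rewrite divnK.
have blk : forall k : 'I_m, (k0 + k < n %/ s0)%N.
  move=> k; rewrite -(ltn_pmul2r s0pos) -nd.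
  have hk := ltn_ord k; move: (nat_of_ord k) hk => kk; rewrite mdef => hk.
  have : ((k0 + kk).+1 * s0 <= k1 * s0)%N by rewrite leq_pmul2r //; lia.
  rewrite mulSn; lia.
set F := \sum_(k < m) wt_GC_window c ((k0 + k) * s0) s0.
have s0R : (0 : R) < s0%:R by rewrite ltr0n.
have bnd : forall k : 'I_m,
   s0%:R * (1/2 - eps) <= (wt_GC_window c ((k0 + k) * s0) s0)%:R :> R /\
   (wt_GC_window c ((k0 + k) * s0) s0)%:R <= s0%:R * (1/2 + eps) :> R.
  move=> k; have := Hpb _ (blk k).
  set w := (wt_GC_window _ _ _)%:R => h.
  have wu : w = (w / s0%:R) * s0%:R by rewrite divfK // gt_eqF.
  set u := w / s0%:R in wu h.
  move: h; rewrite ler_norml => /andP [h1 h2].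
  rewrite wu; split; nra.
have FR1 : (m * s0)%:R * (1/2 - eps) <= F%:R :> R.
  rewrite /F natr_sum -[m in (m * s0)%N]card_ord -sum_nat_const natr_sum mulr_suml.
  by apply: ler_sum => k _; rewrite mulr_natl -mulr_natl (bnd k).1.
have FR2 : F%:R <= (m * s0)%:R * (1/2 + eps) :> R.
  rewrite /F natr_sum -[m in (m * s0)%N]card_ord -sum_nat_const natr_sum mulr_suml.
  by apply: ler_sum => k _; exact: (bnd k).2.
rewrite wdec !natrD addrAC -natrD.
have sR : (m * s0)%:R = s%:R - (a + b)%:R :> R.
  by rewrite sdec !natrD; ring.
rewrite natrB // (_ : 1%:R = 1) //.
apply: (@real_bound R eps s%:R s0%:R (a + b)%:R) => //.
- by rewrite ltr0n; lia.
- by rewrite ler_nat leq_add // wt_le.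
- rewrite -(natrB _ s0pos) -(natrM _ 2) ler_nat; lia.
  idtac.
- by rewrite -sR.
- by rewrite -sR.
Qed.
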